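(* Assume the index sets are ordered ($\mathcal I_1=\{1,\dots,l\}$, $\mathcal I_0=\{l+1,\dots,n\}$) and let $\psi$ be the SC decoder. Then for every decoder $\phi:\mathcal X^l\times\mathcal Y^n\to\mathcal X^n$, $$\Pr\big(\psi(A\mathbf X,\mathbf Y)\neq\mathbf X\big)\le n\,\Pr\big(\phi(A\mathbf X,\mathbf Y)\neq\mathbf X\big).$$ In particular, if $\Pr(\phi(A\mathbf X,\mathbf Y)\neq\mathbf X)=o(1/n)$ along a sequence of codes, then $\Pr(\psi(A\mathbf X,\mathbf Y)\neq\mathbf X)\to0$.
   Context: Setup: $\mathcal X,\mathcal Y$ finite, $|\mathcal X|\ge2$; $(\mathbf X,\mathbf Y)$ random on $\mathcal X^n\times\mathcal Y^n$; $A:\mathcal X^n\to\mathcal X^l$; $\{\mathcal I_0,\mathcal I_1\}$ a partition of $\{1,\dots,n\}$ with $|\mathcal I_1|=l$; $B:\mathcal X^n\to\mathcal X^{n-l}$ such that $T:\mathcal X^n\to\mathcal X^n$ is bijective, where $T(x)$ is the vector $c$ whose entries on $\mathcal I_1$ (increasing order) form $Ax$ and whose entries on $\mathcal I_0$ (increasing order) form $Bx$. Notation: $c_i^j=(c_i,\dots,c_j)$. Extended codeword: $\mathbf C=(C_1,\dots,C_n)=T(\mathbf X)$. SC decoder: for $i\in\mathcal I_0$ let $f_i(c_1^{i-1},y)\in\arg\max_{a\in\mathcal X}\mu_{C_i\mid C_1^{i-1}\mathbf Y}(a\mid c_1^{i-1},y)$ (ties and zero-probability conditions resolved by an arbitrary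 fixed rule). Given $(u,y)\in\mathcal X^l\times\mathcal Y^n$, define $\hat c$ recursively for $i=1,\dots,n$: $\hat c_{\mathcal I_1}=u$ (entries on $\mathcal I_1$ given by $u$), and $\hat c_i=f_i(\hat c_1^{i-1},y)$ for $i\in\mathcal I_0$. Then $\psi(u,y)\equiv T^{-1}(\hat c)$. *)

(* Defs.v *)
From HB Require Import structures.
From mathcomp Require Import all_boot all_order all_algebra.
Set Implicit Arguments. Unset Strict Implicit. Unset Printing Implicit Defensive.
Import Order.TTheory GRing.Theory Num.Theory.
Local Open Scope ring_scope.

(* Block length n = l + m; index set I_1 = {0,..,l-1} (the paper's 1..l),
   I_0 = {l,..,n-1} (the paper's l+1..n).  Vectors in X^n are {ffun 'I_n -> X}. *)

Definition extT (X : finType) (l m : nat)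
  (A : {ffun 'I_(l + m) -> X} -> {ffun 'I_l -> X})
  (B : {ffun 'I_(l + m) -> X} -> {ffun 'I_m -> X})
  (x : {ffun 'I_(l + m) -> X}) : {ffun 'I_(l + m) -> X} :=
  [ffun i => match split i with inl j => A x j | inr k => B x k end].

Definition prefix_match (X : finType) (n : nat) (c : {ffun 'I_n -> X}) (s : seq X) : bool :=
  [forall j : 'I_n, (j < size s)%N ==> (c j == nth (c j) s j)].

(* P(C_1^{i-1} = s, C_i = a, Y = y) where C = T X; here i = size s. *)
Definition joint_pref (R : realFieldType) (X Y : finType) (n : nat)
  (mu : {ffun {ffun 'I_n -> X} * {ffun 'I_n -> Y} -> R})
  (T : {ffun 'I_n -> X} -> {ffun 'I_n -> X})
  (i : 'I_n) (s : seq X) (y : {ffun 'I_n -> Y}) (a : X) : R :=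
  \sum_(xy | [&& prefix_match (T xy.1) s, T xy.1 i == a & xy.2 == y]) mu xy.

Definition marg_pref (R : realFieldType) (X Y : finType) (n : nat)
  (mu : {ffun {ffun 'I_n -> X} * {ffun 'I_n -> Y} -> R})
  (T : {ffun 'I_n -> X} -> {ffun 'I_n -> X})
  (s : seq X) (y : {ffun 'I_n -> Y}) : R :=
  \sum_(xy | prefix_match (T xy.1) s && (xy.2 == y)) mu xy.

(* Conditional probability mu_{C_i | C_1^{i-1} Y}(a | s, y); set to 0 when the
   conditioning event has probability 0 (then any argmax choice is allowed). *)
Definition cond_prob (R : realFieldType) (X Y : finType) (n : nat)
  (mu : {ffun {ffun 'I_n -> X} * {ffun 'I_n -> Y} -> R})
  (T : {ffun 'I_n -> X} -> {ffun 'I_n -> X})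
  (i : 'I_n) (s : seq X) (y : {ffun 'I_n -> Y}) (a : X) : R :=
  let d := marg_pref mu T s y in
  if d == 0 then 0 else joint_pref mu T i s y a / d.

Definition sc_step (X Y : finType) (n l : nat) (u : {ffun 'I_l -> X})
  (f : nat -> seq X -> {ffun 'I_n -> Y} -> X) (y : {ffun 'I_n -> Y})
  (k : nat) (s : seq X) : X :=
  if @insub nat (fun k => (k < l)%N) 'I_l k is Some j then u j else f k s y.

Fixpoint sc_prefix (X Y : finType) (n l : nat) (u : {ffun 'I_l -> X})
  (f : nat -> seq X -> {ffun 'I_n -> Y} -> X) (y : {ffun 'I_n -> Y})
  (k : nat) : seq X :=
  match k with
  | 0 => [::]
  | k'.+1 => rcons (sc_prefix u f y k') (sc_step u f y k' (sc_prefix u f y k'))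
  end.

Definition sc_chat (X Y : finType) (n l : nat) (u : {ffun 'I_l -> X})
  (f : nat -> seq X -> {ffun 'I_n -> Y} -> X) (y : {ffun 'I_n -> Y}) : {ffun 'I_n -> X} :=
  [ffun i : 'I_n => sc_step u f y i (sc_prefix u f y i)].

Definition err_prob (R : realFieldType) (X Y : finType) (n l : nat)
  (mu : {ffun {ffun 'I_n -> X} * {ffun 'I_n -> Y} -> R})
  (A : {ffun 'I_n -> X} -> {ffun 'I_l -> X})
  (dec : {ffun 'I_l -> X} -> {ffun 'I_n -> Y} -> {ffun 'I_n -> X}) : R :=
  \sum_(xy | dec (A xy.1) xy.2 != xy.1) mu xy.

(* Main.v *)
Require Import Defs.
From HB Require Import structures.
From mathcomp Require Import all_boot all_order all_algebra.
Import Order.TTheory GRing.Theory Num.Theory.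
Local Open Scope ring_scope.

Lemma sc_prefixE (X Y : finType) (n l : nat) (u : {ffun 'I_l -> X})
  (f : nat -> seq X -> {ffun 'I_n -> Y} -> X) (y : {ffun 'I_n -> Y}) (k : nat) :
  sc_prefix u f y k = map (fun j => sc_step u f y j (sc_prefix u f y j)) (iota 0 k).
Proof.
elim: k => [//|k IH].
rewrite -addn1 iotaD map_cat /= add0n -IH cats1 addn1 //.
Qed.

Lemma pm_map (X : finType) (n i : nat) (h : (i <= n)%N) (c : {ffun 'I_n -> X})
  (k : {ffun 'I_i -> X}) :
  prefix_match c (map k (enum 'I_i)) = ([ffun j => c (widen_ord h j)] == k).
Proof.
apply/forallP/eqP => [H|<-].
  apply/ffunP => j; rewrite ffunE.
  have := H (widen_ord h j); rewrite /= size_map size_enum_ord ltn_ord /= => /eqP ->.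
  by rewrite (nth_map j) ?size_enum_ord // nth_ord_enum.
move=> j; apply/implyP; rewrite size_map size_enum_ord => hj.
rewrite (nth_map (Ordinal hj)) ?size_enum_ord //.
have -> : nth (Ordinal hj) (enum 'I_i) j = Ordinal hj by exact: (nth_ord_enum (Ordinal hj) (Ordinal hj)).
rewrite ffunE.
by apply/eqP; congr (c _); apply: val_inj.
Qed.

Lemma extT_l (X : finType) (l m : nat)
  (A : {ffun 'I_(l + m) -> X} -> {ffun 'I_l -> X})
  (B : {ffun 'I_(l + m) -> X} -> {ffun 'I_m -> X}) x (j : 'I_l) :
  extT A B x (lshift m j) = A x j.
Proof.
by rewrite /extT ffunE (unsplitK (inl j)).
Qed.

Lemma sum_sub (R : realFieldType) (I : finType) (mu : I -> R) (P Q : pred I) :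
  (forall i, 0 <= mu i) -> (forall i, P i -> Q i) ->
  \sum_(i | P i) mu i <= \sum_(i | Q i) mu i.
Proof.
move=> h0 hPQ; rewrite [X in X <= _]big_mkcond [X in _ <= X]big_mkcond /=.
apply: ler_sum => i _; case: ifP => hP; first by rewrite hPQ.
by case: ifP.
Qed.

Theorem theorem2 (R : realFieldType) (X Y : finType) (l m : nat)
  (hX : (1 < #|X|)%N)
  (mu : {ffun {ffun 'I_(l + m) -> X} * {ffun 'I_(l + m) -> Y} -> R})
  (mu_ge0 : forall xy, 0 <= mu xy)
  (mu_sum1 : \sum_xy mu xy = 1)
  (A : {ffun 'I_(l + m) -> X} -> {ffun 'I_l -> X})
  (B : {ffun 'I_(l + m) -> X} -> {ffun 'I_m -> X})
  (Tinv : {ffun 'I_(l + m) -> X} -> {ffun 'I_(l + m) -> X})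
  (TK : cancel (extT A B) Tinv) (TinvK : cancel Tinv (extT A B))
  (f : nat -> seq X -> {ffun 'I_(l + m) -> Y} -> X)
  (f_argmax : forall (i : 'I_(l + m)), (l <= i)%N ->
      forall (s : seq X), size s = i -> forall y a,
        cond_prob mu (extT A B) i s y a <= cond_prob mu (extT A B) i s y (f i s y))
  (phi : {ffun 'I_l -> X} -> {ffun 'I_(l + m) -> Y} -> {ffun 'I_(l + m) -> X}) :
  err_prob mu A (fun u y => Tinv (sc_chat u f y))
    <= (l + m)%:R * err_prob mu A phi.
Proof.
set T := extT A B.
have errge0 : 0 <= err_prob mu A phi by apply: sumr_ge0.
pose key (i : 'I_(l+m)) (c : {ffun 'I_(l+m) -> X}) : {ffun 'I_i -> X} :=
  [ffun j => c (widen_ord (ltnW (ltn_ord i)) j)].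
pose sk (i : 'I_(l+m)) (k : {ffun 'I_i -> X}) : seq X := map k (enum 'I_i).
pose bad (i : 'I_(l+m)) (xy : {ffun 'I_(l + m) -> X} * {ffun 'I_(l + m) -> Y}) :=
  f i (sk i (key i (T xy.1))) xy.2 != T xy.1 i.
have perkey : forall i : 'I_(l+m), (l <= i)%N -> forall s, size s = i -> forall y a,
    joint_pref mu T i s y a <= joint_pref mu T i s y (f i s y).
  move=> i hli s hs y a; have := f_argmax i hli s hs y a; rewrite /cond_prob /=.
  have jm : forall b, joint_pref mu T i s y b <= marg_pref mu T s y.
    by move=> b; apply: sum_sub => // xy /and3P[-> _ ->].
  have j0 : forall b, 0 <= joint_pref mu T i s y b by move=> b; apply: sumr_ge0.
  case: eqP => [d0 _|/eqP d0 H].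
    by apply: le_trans (jm a) _; rewrite d0 j0.
  have dpos : 0 < marg_pref mu T s y by rewrite lt_def d0 sumr_ge0.
  rewrite -(divfK d0 (joint_pref mu T i s y a)) -(divfK d0 (joint_pref mu T i s y (f i s y))).
  by rewrite ler_pM2r ?invr_gt0 // -ler_pM2r //.
have corr : forall (i : 'I_(l+m)) (h : {ffun 'I_i -> X} -> {ffun 'I_(l+m) -> Y} -> X),
    \sum_xy (if h (key i (T xy.1)) xy.2 == T xy.1 i then mu xy else 0) =
    \sum_(ky : {ffun 'I_i -> X} * {ffun 'I_(l+m) -> Y}) joint_pref mu T i (sk i ky.1) ky.2 (h ky.1 ky.2).
  move=> i h.
  rewrite (partition_big (fun xy => (key i (T xy.1), xy.2)) xpredT) //=.
  apply: eq_bigr => [[k y]] _ /=.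
  rewrite /joint_pref big_mkcond [in RHS]big_mkcond /=.
  apply: eq_bigr => xy _.
  rewrite /sk (@pm_map _ _ _ (ltnW (ltn_ord i))) xpair_eqE.
  rewrite /key; case: eqP => [<-|hk] /=; last first.
    by [].
  case: (eqVneq xy.2 y) => [->|hy] /=; last by rewrite andbF.
  by rewrite andbT eq_sym.
have mapi : forall i : 'I_(l+m), (l <= i)%N -> \sum_(xy | bad i xy) mu xy <= err_prob mu A phi.
  move=> i hli.
  pose g (k : {ffun 'I_i -> X}) y := T (phi [ffun j : 'I_l => k (widen_ord hli j)] y) i.
  have E : forall h : {ffun 'I_i -> X} -> {ffun 'I_(l+m) -> Y} -> X,
      \sum_(xy | h (key i (T xy.1)) xy.2 != T xy.1 i) mu xy =
      1 - \sum_xy (if h (key i (T xy.1)) xy.2 == T xy.1 i then mu xy else 0).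
    move=> h; rewrite -mu_sum1 big_mkcond -sumrB; apply: eq_bigr => xy _.
    by case: eqP => _ /=; rewrite ?subrr ?subr0.
  apply: le_trans (_ : \sum_(xy | g (key i (T xy.1)) xy.2 != T xy.1 i) mu xy <= _).
    rewrite (E (fun k y => f i (sk i k) y)) E lerD2l lerN2 corr.
    rewrite (corr i (fun k y => f i (sk i k) y)); apply: ler_sum => ky _; apply: perkey => //.
    by rewrite /sk size_map size_enum_ord.
  apply: sum_sub => // xy; apply: contra_neq => Ephi.
  rewrite /g.
  have -> : [ffun j : 'I_l => key i (T xy.1) (widen_ord hli j)] = A xy.1.
    apply/ffunP => j; rewrite !ffunE.
    have -> : widen_ord (ltnW (ltn_ord i)) (widen_ord hli j) = lshift m j by apply: val_inj.
    by rewrite (unsplitK (inl j)).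
  by rewrite Ephi.
have pw : forall xy, (if Tinv (sc_chat (A xy.1) f xy.2) != xy.1 then mu xy else 0) <=
    \sum_(i : 'I_(l+m)) (if (l <= i)%N && bad i xy then mu xy else 0).
  move=> [x y] /=; case: ifP => [herr|_]; last by apply: sumr_ge0 => i _; case: ifP.
  set c := sc_chat (A x) f y in herr *.
  have hne : c != T x by apply/eqP => E; move: herr; rewrite E TK eqxx.
  have [i0 hi0] : exists i : 'I_(l+m), c i != T x i.
    apply/existsP; move: hne; apply: contraR => /existsPn H.
    by apply/eqP/ffunP => i; apply/eqP; have := H i; rewrite negbK.
  case: (@arg_minnP _ i0 (fun i => c i != T x i) (fun i : 'I_(l+m) => val i) hi0) => i hi hmin.
  have hpre : forall j : 'I_(l+m), (j < i)%N -> c j = T x j.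
    move=> j hj; apply/eqP; apply: contraTT hj => hj; rewrite -leqNgt; exact: hmin.
  have hli : (l <= i)%N.
    rewrite leqNgt; apply/negP => hil.
    have Ei : i = lshift m (Ordinal hil) by apply: val_inj.
    move: hi; rewrite Ei /c ffunE /sc_step.
    case: insubP => [j _ hj|]; last by rewrite /= hil.
    have -> : j = Ordinal hil by apply: val_inj.
    by rewrite /T (@extT_l _ _ _ A B) eqxx.
  have hbad : bad i (x, y).
    rewrite /bad /=; move: hi; rewrite /c ffunE /sc_step insubN -?leqNgt //.
    suff -> : sc_prefix (A x) f y i = sk i (key i (T x)) by [].
    rewrite sc_prefixE /sk -val_enum_ord -map_comp; apply: eq_map => j /=.
    rewrite /key ffunE -hpre //.
    by rewrite /c ffunE.
    exact: (ltn_ord j).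
  rewrite (bigD1 i) //= hli hbad /= lerDl.
  by apply: sumr_ge0 => j _; case: ifP.
rewrite /err_prob big_mkcond /=.
apply: le_trans (ler_sum _ (fun xy _ => pw xy)) _.
rewrite exchange_big /=.
apply: le_trans (_ : \sum_(i : 'I_(l+m)) err_prob mu A phi <= _).
  apply: ler_sum => i _.
  case: (leqP l i) => hli /=.
    rewrite -big_mkcond /=; exact: mapi.
  by rewrite big1.
by rewrite sumr_const card_ord mulr_natl.
Qed.
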